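(* Let $S\in\{0,1\}^{n\times n}$ be a symmetric binary matrix. Then the problem $$\min_{R\in\mathcal{R}^n} \; \sum_{i,j=1}^n |R_{ij}-S_{ij}|$$ admits an optimal solution $R\in\{0,1\}^{n\times n}$.
   Context: A real matrix $R\in\mathbb{R}^{n\times n}$ is a strong-R-matrix (strong Robinson matrix) if it is symmetric and satisfies $R_{ij}\le R_{kl}$ for all $(i,j,k,l)$ with $|i-j|\ge|k-l|$. $\mathcal{R}^n$ denotes the set of $n\times n$ strong-R-matrices. *)

(* Defs.v *)
From HB Require Import structures.
From mathcomp Require Import all_boot all_order all_algebra.
Set Implicit Arguments. Unset Strict Implicit. Unset Printing Implicit Defensive.
Import Order.TTheory GRing.Theory Num.Theory.
Local Open Scope ring_scope.

Definition idist (n : nat) (i j : 'I_n) : nat := (maxn i j - minn i j)%N.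

Definition strongR (R : realFieldType) (n : nat) (A : 'M[R]_n) : Prop :=
  A^T = A /\
  (forall i j k l : 'I_n, (idist k l <= idist i j)%N -> A i j <= A k l).

Definition binary_mx (R : realFieldType) (n : nat) (A : 'M[R]_n) : Prop :=
  forall i j, A i j = 0 \/ A i j = 1.

Definition l1cost (R : realFieldType) (n : nat) (A B : 'M[R]_n) : R :=
  \sum_(i < n) \sum_(j < n) `|A i j - B i j|.

(* Main.v *)
Require Import Defs.
From HB Require Import structures.
From mathcomp Require Import all_boot all_order all_algebra.
From mathcomp Require Import lra.
Set Implicit Arguments. Unset Strict Implicit.
Import Order.TTheory GRing.Theory Num.Theory.
Local Open Scope ring_scope.

Section Aux.
Variable R : realFieldType.

Definition clip (x : R) : R := if x < 0 then 0 else if 1 < x then 1 else x.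

Lemma clip_ge0 x : 0 <= clip x.
Proof. rewrite /clip; case: ltP => h; first by []; case: ltP => h2; lra. Qed.

Lemma clip_le1 x : clip x <= 1.
Proof. rewrite /clip; case: ltP => h; first lra; case: ltP => h2; lra. Qed.

Lemma clip_mono x y : x <= y -> clip x <= clip y.
Proof.
rewrite /clip => h; case: (ltP x 0) => h1; case: (ltP y 0) => h2;
  try case: (ltP 1 x) => h3; try case: (ltP 1 y) => h4; lra.
Qed.

Lemma clip_abs x (s : R) : s = 0 \/ s = 1 -> `|clip x - s| <= `|x - s|.
Proof.
move=> [->|->]; rewrite ?subr0.
  rewrite (ger0_norm (clip_ge0 x)) /clip.
  case: (ltP x 0) => h1; first by rewrite normr_ge0.
  rewrite ger0_norm //; case: ltP => h2; lra.
rewrite (ler0_norm (x := clip x - 1)); last by have := clip_le1 x; lra.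
rewrite /clip; case: (ltP x 0) => h1.
  rewrite ler0_norm; lra.
case: ltP => h2.
  rewrite ger0_norm; lra.
rewrite ler0_norm; lra.
Qed.

Lemma exists_min (f : nat -> R) N :
  exists t, (t <= N)%N /\ forall t', (t' <= N)%N -> f t <= f t'.
Proof.
elim: N => [|N [t [ht hmin]]].
  by exists 0%N; split => // t'; rewrite leqn0 => /eqP ->.
case: (leP (f t) (f N.+1)) => h.
  exists t; split; first by apply: leqW.
  move=> t'; rewrite leq_eqVlt => /orP[/eqP -> //|]; rewrite ltnS; exact: hmin.
exists N.+1; split => // t'; rewrite leq_eqVlt => /orP[/eqP -> //|].
rewrite ltnS => /hmin; lra.
Qed.

End Aux.

Definition Bmx (R : realFieldType) (n t : nat) : 'M[R]_n :=
  \matrix_(i, j) ((idist i j < t)%N)%:R.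

Lemma idistC n (i j : 'I_n) : idist i j = idist j i.
Proof. by rewrite /idist maxnC minnC. Qed.

Lemma Bmx_strongR (R : realFieldType) n t : strongR (Bmx R n t).
Proof.
split.
  by apply/matrixP => i j; rewrite !mxE idistC.
move=> i j k l h; rewrite !mxE.
case: (ltnP (idist i j) t) => h1.
  by rewrite (leq_ltn_trans h h1).
by case: (_ < _)%N; rewrite ?ler01.
Qed.

Lemma Bmx_bin (R : realFieldType) n t : binary_mx (Bmx R n t).
Proof. by move=> i j; rewrite mxE; case: (_ < _)%N; [right|left]. Qed.

Theorem lemma1 (R : realFieldType) (n : nat) (S : 'M[R]_n)
  (hSsym : S^T = S) (hSbin : binary_mx S) :
  exists Ropt : 'M[R]_n,
    [/\ strongR Ropt, binary_mx Ropt &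
        forall R' : 'M[R]_n, strongR R' -> l1cost Ropt S <= l1cost R' S].
Proof.
have [t [ht tmin]] := exists_min (fun t => l1cost (Bmx R n t) S) n.
exists (Bmx R n t); split; [exact: Bmx_strongR | exact: Bmx_bin |].
move=> A [_ hA].
case: n S hSsym hSbin A hA t ht tmin => [|m] S hSsym hSbin A hA t ht tmin.
  by rewrite /l1cost !big_ord0.
pose c (d : nat) : R := if (d < m.+1)%N then clip (A ord0 (inord d)) else 0.
pose c' (t : nat) : R := if t is t'.+1 then c t' else 1.
pose lam (t : nat) : R := c' t - c' t.+1.
have c_ge0 d : 0 <= c d by rewrite /c; case: ifP => _; rewrite ?clip_ge0.
have c_le1 d : c d <= 1 by rewrite /c; case: ifP => _; rewrite ?clip_le1 ?ler01.
have idist0 d : (d < m.+1)%N -> idist (ord0 : 'I_m.+1) (inord d) = d.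
  by move=> hd; rewrite /idist inordK // max0n min0n subn0.
have lam_ge0 k : 0 <= lam k.
  rewrite /lam subr_ge0; case: k => [|k] /=; first exact: c_le1.
  case hk: (k.+1 < m.+1)%N; last by have := c_ge0 k; rewrite [c k.+1]/c hk.
  rewrite /c hk (ltnW hk); apply: clip_mono; apply: hA.
  by rewrite !idist0 // ltnW.
have tele a b : (a <= b)%N -> \sum_(a <= k < b) lam k = c' a - c' b.
  move=> hab; rewrite (telescope_sumr_eq (fun k => - c' k)) //; first by rewrite opprK addrC.
  by move=> k _; rewrite /lam opprK addrC.
have sumlam : \sum_(0 <= k < m.+2) lam k = 1.
  by rewrite tele // /= /c ltnn subr0.
have sumlamd d : (d < m.+1)%N ->
    \sum_(0 <= k < m.+2) lam k * ((d < k)%N)%:R = c d.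
  move=> hd; rewrite (big_cat_nat _ (n := d.+1)) //=; last by rewrite ltnW.
  rewrite big_nat_cond big1 ?add0r; last first.
    by move=> k /andP[/andP[_ hk] _]; rewrite ltnNge -ltnS hk mulr0.
  rewrite (eq_big_nat _ _ (F2 := lam)); last by move=> k /andP[hk _]; rewrite hk mulr1.
  rewrite tele; last by rewrite ltnW.
  have -> : c' m.+2 = 0 by rewrite /c' /c ltnn.
  by rewrite subr0.
have Aeq (i j : 'I_m.+1) : A i j = A ord0 (inord (idist i j)).
  have hd : (idist i j < m.+1)%N.
    by rewrite /idist (leq_ltn_trans (leq_subr _ _)) // gtn_max !ltn_ord.
  by apply/eqP; rewrite eq_le !hA ?idist0.
have point (i j : 'I_m.+1) :
    `|c (idist i j) - S i j| =
    \sum_(0 <= k < m.+2) lam k * `|(Bmx R m.+1 k) i j - S i j|.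
  have hd : (idist i j < m.+1)%N.
    by rewrite /idist (leq_ltn_trans (leq_subr _ _)) // gtn_max !ltn_ord.
  case: (hSbin i j) => ->.
    rewrite subr0 ger0_norm // -sumlamd //; apply: eq_bigr => k _.
    by rewrite mxE subr0 normr_nat.
  rewrite ler0_norm ?subr_le0 // opprB -sumlamd // -{1}sumlam -sumrB.
  apply: eq_bigr => k _; rewrite mxE.
  case: (_ < _)%N.
    by rewrite /= mulr1n mulr1 !subrr normr0 mulr0.
  by rewrite /= mulr0n mulr0 subr0 sub0r normrN normr1 mulr1.
apply: (@le_trans _ _ (\sum_(0 <= k < m.+2) lam k * l1cost (Bmx R m.+1 k) S)).
  rewrite -[X in X <= _]mul1r -sumlam mulr_suml; apply: ler_sum_nat => k /andP[_ hk].
  by apply: ler_wpM2l => //; apply: tmin; rewrite -ltnS.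
rewrite /l1cost.
have -> : \sum_(0 <= k < m.+2) lam k *
     (\sum_(i < m.+1) \sum_(j < m.+1) `|Bmx R m.+1 k i j - S i j|) =
     \sum_(i < m.+1) \sum_(j < m.+1) `|c (idist i j) - S i j|.
  under eq_bigr => k _ do rewrite mulr_sumr.
  rewrite exchange_big; apply: eq_bigr => i _.
  under eq_bigr => k _ do rewrite mulr_sumr.
  rewrite exchange_big; apply: eq_bigr => j _.
  by rewrite point.
apply: ler_sum => i _; apply: ler_sum => j _.
have hd : (idist i j < m.+1)%N.
  by rewrite /idist (leq_ltn_trans (leq_subr _ _)) // gtn_max !ltn_ord.
by rewrite (Aeq i j) /c hd clip_abs.
Qed.
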